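(* In the setting described in the context, for every $i$ with $1\le i\le m-1$, the bounding triangle $T_i$ contains no point of $P$ in its interior.
   Context: $P$ is a finite set of points in the plane, $s,t\in P$ distinct, and coordinates are chosen so that $t=(0,0)$ and $s$ lies in $C_2^t$ below the line $\ell_t^-=\{x+y=0\}$. Cones: $C_0^v=\{x\ge v_x,y\le v_y\}$, $C_1^v=\{x\ge v_x,y\ge v_y\}$, $C_2^v=\{x\le v_x,y\ge v_y\}$, $C_3^v=\{x\le v_x,y\le v_y\}$ with bisector directions $(1,-1),(1,1),(-1,1),(-1,-1)$. The $\Theta_4$-graph of $P$ has, for each $v\in P$ and cone $C_i^v$ containing a point of $P\setminus\{v\}$, a directed edge from $v$ to a point $w$ of $(P\setminus\{v\})\cap C_i^v$ minimizing the projection of $w-v$ onto the bisector direction (the neighbour of $v$ in $C_i^v$). For a point $p$, $\ell_p^-$ and $\ell_p^+$ are the lines through $p$ of slope $-1$ and $+1$. Algorithm: for a vertex $v$, let $T(v,\ell_t^-)=C_1^v\cap\{x+y\le0\}$ if $v_x+v_y<0$, $T(v,\ell_t^-)=C_3^v\cap\{x+y\ge0\}$ if $v_x+v_y>0$, and $\{v\}$ if $v_x+v_y=0$; $v$ is clean if $T(v,\ell_t^-)$ contains no point of $P$ other than $v$. Starting at $v=s$, while $v\ne t$: if $v$ is not clean, take a sweeping step (go to the neighbour of $v$ in $C_1^v$, resp. $C_3^v$, which lies in $T(v,\ell_t^-)$); otherwise take a greedy step (go to the neighbour of $v$ in the cone $C_i^v$ containing $t$). Let $(p_1,q_1),\dots,(p_{m-1},q_{m-1})$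 be, in order, the edges traversed by greedy steps, and set $p_m=t$. Quadrants of $t$: Northern $=\{y\ge|x|\}$, Southern $=\{y\le-|x|\}$, Western $=\{x\le-|y|\}$, Eastern $=\{x\ge|y|\}$. Bounding triangle: if $p_i$ is in the Northern or Southern quadrant let $\mathcal{L}$ be the horizontal line through $p_i$, otherwise the vertical line through $p_i$; $T_i$ is the triangle formed by the lines $\ell_t^-$, $\mathcal{L}$ and $\ell_{q_i}^+$. *)

(* Defs.v *)
From mathcomp Require Import all_boot all_order all_algebra.
Set Implicit Arguments. Unset Strict Implicit. Unset Printing Implicit Defensive.
Import Order.TTheory GRing.Theory Num.Theory.
Local Open Scope ring_scope.

Section Theta4.
Variable R : realFieldType.
Notation pt := (R * R)%type.

(* the origin, i.e. the target t *)
Definition origin : pt := (0, 0).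

Definition cone (i : nat) (v w : pt) : bool :=
  match i with
  | 0%N => (v.1 <= w.1) && (w.2 <= v.2)
  | 1%N => (v.1 <= w.1) && (v.2 <= w.2)
  | 2%N => (w.1 <= v.1) && (v.2 <= w.2)
  | _ => (w.1 <= v.1) && (w.2 <= v.2)
  end.

Definition bis (i : nat) : pt :=
  match i with
  | 0%N => (1, -1)
  | 1%N => (1, 1)
  | 2%N => (-1, 1)
  | _ => (-1, -1)
  end.

Definition proj (i : nat) (v w : pt) : R :=
  (w.1 - v.1) * (bis i).1 + (w.2 - v.2) * (bis i).2.

(* nb v i is the neighbour of v in cone C_i^v in the Theta_4-graph of P
   (for any tie-breaking): whenever C_i^v contains a point of P \ {v},
   nb v i is such a point minimising the projection onto the bisector. *)
Definition theta4_nb (P : seq pt) (nb : pt -> nat -> pt) : Prop :=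
  forall v i, v \in P -> (i < 4)%N ->
    (exists w, [/\ w \in P, w != v & cone i v w]) ->
    [/\ nb v i \in P, nb v i != v, cone i v (nb v i) &
        forall w, w \in P -> w != v -> cone i v w ->
          proj i v (nb v i) <= proj i v w].

Definition Treg (v w : pt) : bool :=
  if v.1 + v.2 < 0 then cone 1 v w && (w.1 + w.2 <= 0)
  else if 0 < v.1 + v.2 then cone 3 v w && (0 <= w.1 + w.2)
  else w == v.

Definition clean (P : seq pt) (v : pt) : Prop :=
  forall w, w \in P -> Treg v w -> w = v.

(* one step of the routing algorithm from v to v' (v <> t) *)
Definition route_step (P : seq pt) (nb : pt -> nat -> pt) (v v' : pt) : Prop :=
  (clean P v /\
    (* greedy step: neighbour in a cone C_i^v containing t *)
    exists i, [/\ (i < 4)%N, cone i v origin & v' = nb v i])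
  \/
  (~ clean P v /\
    (* sweeping step *)
    v' = nb v (if v.1 + v.2 < 0 then 1%N else 3%N)).

Definition orient (a b z : pt) : R :=
  (b.1 - a.1) * (z.2 - a.2) - (b.2 - a.2) * (z.1 - a.1).

(* z lies in the (topological) interior of the triangle abc;
   empty when abc is degenerate *)
Definition in_open_triangle (a b c z : pt) : bool :=
  let o := orient a b c in
  [&& o != 0, 0 < orient a b z * o, 0 < orient b c z * o & 0 < orient c a z * o].

(* interior of the bounding triangle T_i for the greedy edge (p, q):
   the triangle formed by l_t^- : x + y = 0, the line L through p
   (horizontal if p is in the Northern/Southern quadrant, i.e. |p.1| <= |p.2|,
   vertical otherwise) and l_q^+ : y - x = q.2 - q.1.  Its vertices are the
   pairwise intersections of these three lines. *)
Definition in_bounding_triangle (p q z : pt) : bool :=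
  let c := q.2 - q.1 in
  let A : pt := (- (c / 2), c / 2) in
  if `|p.1| <= `|p.2| then
    in_open_triangle A (- p.2, p.2) (p.2 - c, p.2) z
  else
    in_open_triangle A (p.1, - p.1) (p.1, p.1 + c) z.

End Theta4.

(* Main.v *)
Require Import Defs.
From mathcomp Require Import all_boot all_order all_algebra.
From mathcomp Require Import ring lra.
Import Order.TTheory GRing.Theory Num.Theory.
Local Open Scope ring_scope.

Lemma pos_eq (R : numDomainType) (x y : R) : 0 < x -> x = y -> 0 < y.
Proof. by move=> h <-. Qed.

Lemma sgn_prod {R : realFieldType} (d s : R) : d != 0 -> 0 < d * s * (d * d / 4) -> 0 < d * s.
Proof.
move=> d0 h; have hd : 0 < d * d / 4.
  by apply: divr_gt0 => //; rewrite -expr2 exprn_even_gt0.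
by move: h; rewrite pmulr_lgt0.
Qed.

Lemma vert_tri (R : realFieldType) (a c : R) (z1 z2 : R) :
  in_open_triangle (-(c/2), c/2) (a,-a) (a, a+c) (z1, z2) ->
  (2*a+c < 0 /\ z1+z2 < 0 /\ a < z1 /\ c < z2 - z1) \/
  (0 < 2*a+c /\ 0 < z1+z2 /\ z1 < a /\ z2 - z1 < c).
Proof.
rewrite /in_open_triangle /orient /= => /and4P [H0 H1 H2 H3].
have d0 : 2*a+c != 0.
  lazymatch type of H0 with is_true (?X != 0) =>
    have Eo : X = (2*a+c)*(2*a+c)/2 by field end.
  apply: contraNneq H0 => e; by rewrite Eo e mul0r mul0r.
have K1 : 0 < (2*a+c) * (z1+z2) * ((2*a+c)*(2*a+c)/4).
  lazymatch type of H1 with is_true (0 < ?X) =>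
    have E : X = (2*a+c) * (z1+z2) * ((2*a+c)*(2*a+c)/4) by field end.
  by rewrite -E.
have K2 : 0 < (2*a+c) * (2*(a - z1)) * ((2*a+c)*(2*a+c)/4).
  lazymatch type of H2 with is_true (0 < ?X) =>
    have E : X = (2*a+c) * (2*(a - z1)) * ((2*a+c)*(2*a+c)/4) by field end.
  by rewrite -E.
have K3 : 0 < (2*a+c) * (c - (z2 - z1)) * ((2*a+c)*(2*a+c)/4).
  lazymatch type of H3 with is_true (0 < ?X) =>
    have E : X = (2*a+c) * (c - (z2 - z1)) * ((2*a+c)*(2*a+c)/4) by field end.
  by rewrite -E.
move: (sgn_prod _ _ d0 K1) (sgn_prod _ _ d0 K2) (sgn_prod _ _ d0 K3) => {K1 K2 K3} K1 K2 K3.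
case: (ltrgtP (2*a+c) 0) => hd.
- left; nra.
- right; nra.
- by rewrite hd eqxx in d0.
Qed.

Lemma hor_tri (R : realFieldType) (b c : R) (z1 z2 : R) :
  in_open_triangle (-(c/2), c/2) (-b,b) (b - c, b) (z1, z2) ->
  (0 < 2*b-c /\ 0 < z1+z2 /\ z2 < b /\ c < z2 - z1) \/
  (2*b-c < 0 /\ z1+z2 < 0 /\ b < z2 /\ z2 - z1 < c).
Proof.
rewrite /in_open_triangle /orient /= => /and4P [H0 H1 H2 H3].
have d0 : 2*b-c != 0.
  lazymatch type of H0 with is_true (?X != 0) =>
    have Eo : X = -((2*b-c)*(2*b-c)/2) by field end.
  apply: contraNneq H0 => e; by rewrite Eo e mul0r mul0r oppr0.
have K1 : 0 < (2*b-c) * (z1+z2) * ((2*b-c)*(2*b-c)/4).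
  lazymatch type of H1 with is_true (0 < ?X) =>
    have E : X = (2*b-c) * (z1+z2) * ((2*b-c)*(2*b-c)/4) by field end.
  by rewrite -E.
have K2 : 0 < (2*b-c) * (2*(b - z2)) * ((2*b-c)*(2*b-c)/4).
  lazymatch type of H2 with is_true (0 < ?X) =>
    have E : X = (2*b-c) * (2*(b - z2)) * ((2*b-c)*(2*b-c)/4) by field end.
  by rewrite -E.
have K3 : 0 < (2*b-c) * ((z2 - z1) - c) * ((2*b-c)*(2*b-c)/4).
  lazymatch type of H3 with is_true (0 < ?X) =>
    have E : X = (2*b-c) * ((z2 - z1) - c) * ((2*b-c)*(2*b-c)/4) by field end.
  by rewrite -E.
move: (sgn_prod _ _ d0 K1) (sgn_prod _ _ d0 K2) (sgn_prod _ _ d0 K3) => {K1 K2 K3} K1 K2 K3.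
case: (ltrgtP (2*b-c) 0) => hd.
- right; nra.
- left; nra.
- by rewrite hd eqxx in d0.
Qed.
Lemma abs_le (R : realFieldType) (a b : R) : (`|a| <= `|b|) = (a*a <= b*b).
Proof. by rewrite -!expr2 -ler_sqr ?nnegrE ?normr_ge0 // !real_normK ?num_real. Qed.
Lemma TregL (R : realFieldType) (a b : R) w : a+b<0 -> a<=w.1 -> b<=w.2 -> w.1+w.2<=0 -> Treg (a,b) w.
Proof. by move=> h h1 h2 h3; rewrite /Treg /= h /cone h1 h2 h3. Qed.
Lemma TregG (R : realFieldType) (a b : R) w : 0<a+b -> w.1<=a -> w.2<=b -> 0<=w.1+w.2 -> Treg (a,b) w.
Proof. by move=> h h1 h2 h3; rewrite /Treg /= h (lt_gtF h) /cone h1 h2 h3. Qed.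

Lemma neqP (R : realFieldType) (a b z1 z2 : R) : (z1 != a) || (z2 != b) -> (z1, z2) != (a, b).
Proof. by case/orP => h; apply/negP => /eqP [e1 e2]; move: h; rewrite ?e1 ?e2 eqxx. Qed.

Ltac neq := apply: neqP; apply/orP;
  first [left; apply/eqP => ?; lra | right; apply/eqP => ?; lra].

Ltac useT := have : Treg (a,b) (z1,z2);
  [ first [apply: TregL => /=; lra | apply: TregG => /=; lra]
  | move/(cl _ zP); case=> ? ?; lra ].
Ltac useO := have : Treg (a,b) (origin _);
  [ first [apply: TregL => /=; lra | apply: TregG => /=; lra]
  | move/(cl _ oP); case=> ? ?; lra ].
Ltac useM := have : (z1, z2) != (a, b);
  [ neq
  | move/(qmin _ zP); simpl;
    move=> /(_ ltac:(apply/andP; split; lra)); lra ].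

Lemma key (R : realFieldType) (P : seq (R * R)) (nb : R * R -> nat -> R * R)
  (p z : R * R) (i : nat) :
  origin R \in P -> theta4_nb P nb -> p \in P -> p != origin R -> clean P p ->
  (i < 4)%N -> cone i p (origin R) -> z \in P ->
  ~~ in_bounding_triangle p (nb p i) z.
Proof.
move=> oP nbP pP po cl i4 ci zP.
have [qP qp qc qmin] : [/\ nb p i \in P, nb p i != p, cone i p (nb p i) &
        forall w, w \in P -> w != p -> cone i p w ->
          proj i p (nb p i) <= proj i p w].
  by apply: nbP => //; exists (origin R); rewrite oP eq_sym po.
move: qp qc qmin; clear qP; case: (nb p i) => q1 q2 qp qc qmin.
move: pP po ci qp qc qmin cl; case: p => a b pP po ci qp qc qmin cl.
move: zP qmin; case: z => z1 z2 zP qmin.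
rewrite /in_bounding_triangle /= abs_le; apply/negP.
have po1 : (a != 0) || (b != 0).
  by apply: contraR po; rewrite negb_or !negbK => /andP [/eqP -> /eqP ->].
clear po qp.
move: i4 ci qc qmin; rewrite /cone /proj /bis /=.
case: i => [|[|[|[|i]]]] // _ /andP [c1 c2] /andP [qc1 qc2] qmin; simpl in qmin.
-
  case: (ltrgtP (a+b) 0) => hs.
  + case: ifP => habs; first by move=> _; nra.
    case/vert_tri => [[hd [h1 [h2 h3]]] | [hd _]]; last by lra.
    by case: (lerP b z2) => hz2; [useT | useM].
  + case: ifP => habs; last by move=> _; nra.
    case/hor_tri => [[hd [h1 [h2 h3]]] | [hd _]]; last by lra.
    by case: (lerP z1 a) => hz; [useT | useM].
  + case: ifP => habs; last by move=> _; nra.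
    case/hor_tri => [[hd [h1 [h2 h3]]] | [hd _]]; last by lra.
    useM.
-
  case: (ltrgtP (a+b) 0) => hs; first by useO.
  + lra.
  + have a0 : a = 0 by lra.
    have b0 : b = 0 by lra.
    by move: po1; rewrite a0 b0 eqxx.
-
  case: (ltrgtP (a+b) 0) => hs.
  + case: ifP => habs; last by move=> _; nra.
    case/hor_tri => [[hd _] | [hd [h1 [h2 h3]]]]; first by lra.
    by case: (lerP a z1) => hz; [useT | useM].
  + case: ifP => habs; first by move=> _; nra.
    case/vert_tri => [[hd _] | [hd [h1 [h2 h3]]]]; first by lra.
    by case: (lerP z2 b) => hz; [useT | useM].
  + case: ifP => habs; last by move=> _; nra.
    case/hor_tri => [[hd _] | [hd [h1 [h2 h3]]]]; first by lra.
    useM.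
-
  case: (ltrgtP (a+b) 0) => hs.
  + lra.
  + useO.
  + have a0 : a = 0 by lra.
    have b0 : b = 0 by lra.
    by move: po1; rewrite a0 b0 eqxx.
Qed.

Lemma nbin (R : realFieldType) (P : seq (R * R)) (nb : R * R -> nat -> R * R) (p p' : R * R) :
  theta4_nb P nb -> origin R \in P -> p \in P -> p != origin R ->
  route_step P nb p p' -> p' \in P.
Proof.
move=> nbP oP pP po [[_ [i [i4 ci ->]]] | [ncl ->]].
  by have [] := nbP p i pP i4; [exists (origin R); rewrite oP eq_sym po ci|].
case: (boolP (has (fun w => Treg p w && (w != p)) P)) => [/hasP [w wP /andP [tw wp]] | hn].
  have cw : cone (if p.1 + p.2 < 0 then 1%N else 3%N) p w.
    move: tw; rewrite /Treg; case: ifP => h1; first by case/andP.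
    case: ifP => h2; first by case/andP.
    by move=> wq; rewrite wq in wp.
  have i4 : ((if (p.1 + p.2 < 0)%R then 1 else 3) < 4)%N by case: ifP.
  by have [] := nbP p _ pP i4; [exists w; rewrite wP wp cw|].
exfalso; apply: ncl => w wP tw.
by apply/eqP; move/hasPn: hn => /(_ w wP); rewrite tw /= negbK.
Qed.

Theorem lemma2 (R : realFieldType) (P : seq (R * R)) (s : R * R)
    (nb : R * R -> nat -> R * R) (v : nat -> R * R) :
  origin R \in P -> s \in P -> s != origin R ->
  s.1 <= 0 -> 0 <= s.2 -> s.1 + s.2 < 0 ->
  theta4_nb P nb ->
  v 0%N = s ->
  (forall k, (forall j, (j <= k)%N -> v j != origin R) ->
     route_step P nb (v k) (v k.+1)) ->
  forall k, (forall j, (j <= k)%N -> v j != origin R) ->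
    clean P (v k) ->
    forall z, z \in P -> ~~ in_bounding_triangle (v k) (v k.+1) z.
Proof.
move=> oP sP _ _ _ _ nbP v0 hstep.
have inP : forall k, (forall j, (j <= k)%N -> v j != origin R) -> v k \in P.
  elim=> [|k IH] H; first by rewrite v0.
  have H' : forall j, (j <= k)%N -> v j != origin R.
    by move=> j jk; apply: H; rewrite (leq_trans jk).
  exact: (nbin _ _ _ _ _ nbP oP (IH H') (H' k (leqnn k)) (hstep k H')).
move=> k H cl z zP.
have [[_ [i [i4 ci ->]]] | [ncl _]] := hstep k H; last by [].
exact: (key _ P nb (v k) z i oP nbP (inP k H) (H k (leqnn k)) cl i4 ci zP).
Qed.
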